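(* Let $q$ be a prime power with $q-1=em$ for positive integers $e,m$, and let $\sigma\in\mathbb{F}_q$. For each $i=0,\dots,e-1$ let $A_i,B_i$ be $0$-$1$ matrices with rows and columns indexed by $\mathbb{F}_q$, each of whose row indexed by $0$ has a $1$ exactly in the columns indexed by elements of $D_0^e$. Assume that for each $i$ the product $A_iB_i$ is $\sigma$-circulant and $B_i$ is $\sigma_i$-circulant for some $\sigma_i\in D_i^e$. Let $C$ be the $\sigma$-circulant matrix whose row indexed by $0$ has a $1$ exactly in the columns indexed by elements of $D_0^e$. Then $\sum_{i=0}^{e-1}A_iB_i+C=mJ$, where $J$ is the $q\times q$ all-ones matrix.
   Context: For a primitive element $\gamma$ of $\mathbb{F}_q$ and $e\mid q-1$, the cyclotomic classes are $D_i^e=\gamma^i\langle\gamma^e\rangle$, $i=0,\dots,e-1$. For $\tau\in\mathbb{F}_q$, a matrix $N$ with rows and columns indexed by $\mathbb{F}_q$ is $\tau$-circulant if $N_{x,y}=N_{x-k,\,y-\tau k}$ for all $x,y,k\in\mathbb{F}_q$. *)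

(* Defs.v *)
From HB Require Import structures.
From mathcomp Require Import all_boot all_order all_algebra all_field.
Set Implicit Arguments. Unset Strict Implicit. Unset Printing Implicit Defensive.
Import GRing.Theory.
Local Open Scope ring_scope.

Definition fmat (F : finFieldType) := F -> F -> nat.

Definition fmul (F : finFieldType) (A B : fmat F) : fmat F :=
  fun x y => (\sum_(z : F) A x z * B z y)%N.

Definition zero_one (F : finFieldType) (A : fmat F) : Prop :=
  forall x y, (A x y <= 1)%N.

Definition circulant (F : finFieldType) (tau : F) (N : fmat F) : Prop :=
  forall x y k : F, N x y = N (x - k) (y - tau * k).

Definition cyclo_class (F : finFieldType) (gamma : F) (e i : nat) : {set F} :=
  [set gamma ^+ (i + e * k)%N | k : 'I_#|F|].

Definition row0_is (F : finFieldType) (N : fmat F) (D : {set F}) : Prop :=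
  forall y : F, N 0 y = nat_of_bool (y \in D).

(* Main.v *)
Require Import Defs.
From HB Require Import structures.
From mathcomp Require Import all_boot all_order all_algebra all_field.
Local Open Scope ring_scope.
Import GRing.Theory.
Set Implicit Arguments. Unset Strict Implicit.

Lemma unit_pow_card (F : finFieldType) (u : F) : u != 0 -> u ^+ (#|F|.-1) = 1.
Proof.
move=> nz; have := expf_card u.
have hc : #|F| = (#|F|.-1).+1 by rewrite prednK // (cardD1 (0:F)).
rewrite {1}hc exprS => h; apply: (mulfI nz); by rewrite mulr1 h.
Qed.

Lemma card_ge2 (F : finFieldType) : (1 < #|F|)%N.
Proof. by rewrite (cardD1 (0:F)) (cardD1 (1:F)) !inE oner_eq0. Qed.

Lemma log_ex (F : finFieldType) (gamma u : F) :
  (#|F|.-1).-primitive_root gamma -> u != 0 -> exists j : nat, u = gamma ^+ j.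
Proof.
move=> pg nz; have [i ->] := prim_rootP pg (unit_pow_card nz); by exists i.
Qed.

Lemma memD (F : finFieldType) (e m : nat) (gamma : F) (i j : nat) :
  (0 < e)%N -> (#|F|.-1 = e * m)%N -> (#|F|.-1).-primitive_root gamma ->
  (i < e)%N ->
  (gamma ^+ j \in cyclo_class gamma e i) = (j == i %[mod e]).
Proof.
move=> e0 hn pg ie.
apply/imsetP/idP.
- move=> [k _ /eqP]; rewrite (eq_prim_root_expr pg) hn => /eqP h.
  have := congr1 (modn^~ e) h; rewrite !modn_dvdm ?dvdn_mulr //.
  by move=> ->; rewrite addnC mulnC modnMDl modn_small.
- move=> /eqP hj.
  have m0 : (0 < m)%N.
    case: m hn => // hn; rewrite muln0 in hn.
    have := card_ge2 F; by rewrite -(prednK (ltnW (card_ge2 F))) hn.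
  have klt : ((j %/ e) %% m < #|F|)%N.
    apply: (leq_trans (ltn_pmod _ m0)).
    by rewrite -[m]mul1n; apply: (leq_trans _ (leq_pred _)); rewrite hn leq_mul2r e0 orbT.
  exists (Ordinal klt) => //=.
  apply/eqP; rewrite (eq_prim_root_expr pg) hn; apply/eqP.
  by rewrite -modnDm muln_modr modn_mod modnDm -(modn_small ie) -hj addnC [(e * (j %/ e))%N]mulnC -divn_eq.
Qed.


Lemma gamma_nz (F : finFieldType) (gamma : F) :
  (#|F|.-1).-primitive_root gamma -> gamma != 0.
Proof.
move=> pg; apply/eqP=> g0; have := prim_expr_order pg.
rewrite g0 expr0n; case: (#|F|.-1) (prim_order_gt0 pg) => //= n _.
by move/eqP; rewrite eq_sym oner_eq0.
Qed.

Lemma D_nz (F : finFieldType) (gamma : F) e i u :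
  (#|F|.-1).-primitive_root gamma -> u \in cyclo_class gamma e i -> u != 0.
Proof.
move=> pg /imsetP [k _ ->]; by rewrite expf_neq0 // gamma_nz.
Qed.

Lemma memD_mul (F : finFieldType) (e m : nat) (gamma : F) (i : nat) (s z : F) :
  (0 < e)%N -> (#|F|.-1 = e * m)%N -> (#|F|.-1).-primitive_root gamma ->
  (i < e)%N -> s \in cyclo_class gamma e i ->
  (s * z \in cyclo_class gamma e i) = (z \in cyclo_class gamma e 0).
Proof.
move=> e0 hn pg ie hs.
have snz := D_nz pg hs.
have [b sb] := log_ex pg snz.
have hb := hs; rewrite sb (memD _ e0 hn pg ie) in hb.
have [->|znz] := eqVneq z 0.
  rewrite mulr0; apply/idP/idP => /(D_nz pg); by rewrite eqxx.
have [a za] := log_ex pg znz.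
rewrite sb za -exprD (memD _ e0 hn pg ie) (memD _ e0 hn pg e0).
rewrite -(eqP hb) addnC -{2}[b]add0n eqn_modDr.
by [].
Qed.

Lemma partD (F : finFieldType) (e m : nat) (gamma : F) (f : F -> nat) :
  (0 < e)%N -> (#|F|.-1 = e * m)%N -> (#|F|.-1).-primitive_root gamma ->
  (\sum_(i < e) \sum_(u : F) (u \in cyclo_class gamma e i) * f u
    = \sum_(u : F | u != 0%R) f u)%N.
Proof.
move=> e0 hn pg.
rewrite exchange_big [RHS]big_mkcond /=; apply: eq_bigr => u _.
rewrite -big_distrl /=.
have [->|unz] := eqVneq u 0.
  rewrite big1 //= => i _; case: (boolP (0 \in _)) => // /(D_nz pg); by rewrite eqxx.
have [j ->] := log_ex pg unz.
rewrite (bigD1 (Ordinal (ltn_pmod j e0))) //= (memD _ e0 hn pg (ltn_pmod j e0)).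
rewrite modn_mod eqxx big1 ?addn0 ?mul1n // => i /eqP ne.
rewrite (memD _ e0 hn pg (ltn_ord i)) (modn_small (ltn_ord i)).
case: eqP => // h; case: ne; apply: val_inj; by rewrite /= h.
Qed.

Lemma shiftD (F : finFieldType) (e m : nat) (gamma : F) (f : F -> nat) i s :
  (0 < e)%N -> (#|F|.-1 = e * m)%N -> (#|F|.-1).-primitive_root gamma ->
  (i < e)%N -> s \in cyclo_class gamma e i ->
  (\sum_(z : F) (z \in cyclo_class gamma e 0) * f (s * z)%R
    = \sum_(u : F) (u \in cyclo_class gamma e i) * f u)%N.
Proof.
move=> e0 hn pg ie hs.
rewrite [RHS](reindex_inj (mulfI (D_nz pg hs))) /=.
apply: eq_bigr => z _; by rewrite (memD_mul z e0 hn pg ie hs).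
Qed.

Unset Implicit Arguments. Set Strict Implicit.

Theorem mainTheorem7 (F : finFieldType) (e m : nat) (gamma sigma : F)
  (A B : 'I_e -> fmat F) (C : fmat F) :
  (0 < e)%N -> (0 < m)%N -> (#|F|.-1 = e * m)%N ->
  (#|F|.-1).-primitive_root gamma ->
  (forall i, zero_one (A i) /\ zero_one (B i)) ->
  (forall i, row0_is (A i) (cyclo_class gamma e 0) /\
             row0_is (B i) (cyclo_class gamma e 0)) ->
  (forall i, circulant sigma (fmul (A i) (B i))) ->
  (forall i : 'I_e, exists2 si : F, si \in cyclo_class gamma e i & circulant si (B i)) ->
  circulant sigma C -> row0_is C (cyclo_class gamma e 0) ->
  forall x y : F, ((\sum_(i < e) fmul (A i) (B i) x y) + C x y)%N = m.
Proof.
move=> e0 m0 hn pg h01 hrow hcirc hB hC hCrow x y.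
set D0 := cyclo_class gamma e 0.
set w := y - sigma * x.
pose g := fun v : F => nat_of_bool (v \in D0).
have key : forall i : 'I_e, fmul (A i) (B i) x y
    = (\sum_(u:F) (u \in cyclo_class gamma e i) * g (w - u)%R)%N.
  move=> i; have [si hsi hBc] := hB i.
  rewrite (hcirc i x y x) subrr.
  rewrite /fmul -(shiftD (fun u => g (w - u)) e0 hn pg (ltn_ord i) hsi).
  apply: eq_bigr => z _.
  by rewrite (proj1 (hrow i)) (hBc z w z) subrr (proj2 (hrow i)).
rewrite (eq_bigr _ (fun i _ => key i)) (partD _ e0 hn pg).
rewrite (hC x y x) subrr hCrow -/w.
have canw : cancel (fun v => w - v) (fun v => w - v).
  by move=> v; rewrite opprB addrC subrK.
rewrite (reindex_inj (can_inj canw)) /=.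
have hS : (\sum_(v:F) g v = m)%N.
  have h1 : (\sum_(i < e) \sum_(u : F) (u \in cyclo_class gamma e i) * 1
              = e * \sum_(v:F) g v)%N.
    rewrite -[X in (_ = X * _)%N]card_ord -sum_nat_const; apply: eq_bigr => i _.
    have [si hsi _] := hB i.
    rewrite -(shiftD (fun _ => 1%N) e0 hn pg (ltn_ord i) hsi).
    by apply: eq_bigr => z _; rewrite muln1.
  have := partD (fun _ => 1%N) e0 hn pg; rewrite h1.
  have h3 : (\sum_(u:F | u != 0%R) 1 = #|F|.-1)%N.
    by rewrite -(cardC1 (0:F)) -sum1_card.
  rewrite h3 hn => /eqP; rewrite eqn_pmul2l // => /eqP //.
rewrite -hS [in RHS](bigD1 w) //= addnC; congr (_ + _)%N.
apply: eq_big => v; first by rewrite subr_eq0 eq_sym.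
by rewrite canw.
Qed.
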